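(* Let $X$ be a $T_0$ space. If $GSI_2$-convergence in $X$ is topological, then $X$ is $QI_2$-continuous.
   Context: For a $T_0$ space $X$, the specialization order is $x\le y$ iff $x\in \mathrm{cl}\{y\}$; $\uparrow A=\{x: a\le x\text{ for some } a\in A\}$, $\uparrow x=\uparrow\{x\}$; $A^\uparrow$, $A^\downarrow$ are the sets of upper and lower bounds of $A$, and $A^\delta=(A^\uparrow)^\downarrow$. A nonempty subset $A$ of a space is irreducible if whenever $A\subseteq F_1\cup F_2$ with $F_1,F_2$ closed, $A\subseteq F_1$ or $A\subseteq F_2$. $X^{(<\omega)}$ is the set of nonempty finite subsets of $X$. $P_S(X)$ is the set of nonempty compact saturated (upper) subsets of $X$ with the upper Vietoris topology, basis $\{\square U: U\text{ open}\}$, $\square U=\{Q: Q\subseteq U\}$. A net is eventually in $U$ if from some index on all its terms lie in $U$; it converges to $x$ in a topology if it is eventually in every open set containing $x$. A net $(x_i)_{i\in I}$ $GSI_2$-converges to $x$ if there exists $\mathcal F\subseteq X^{(<\omega)}$ with $\{\uparrow G: G\in\mathcal F\}$ irreducible in $P_S(X)$ such that (i) for every open $U$, if $\uparrow G\subseteq U$ for some $G\in\mathcal F$ then $x_i\in U$ eventually, and (ii) $\bigcap_{G\in\mathcal F}\uparrow G\subseteq\uparrow x$. Let $\mathcal{O}(\mathcal{GSI}_2(X))$ be the topology of all $U\subseteq X$ such that every net $GSI_2$-converging to a point of $U$ is eventually in $U$. $GSI_2$-convergence in $X$ is topological if for every net and point, the net $GSI_2$-converges to the point iff it converges to it in the topology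 $\mathcal{O}(\mathcal{GSI}_2(X))$. For $A\subseteq X$, $x\in X$, $A\ll_{I_2}x$ means: for every irreducible $D\subseteq X$ with $x\in D^\delta$, $A\cap\mathrm{cl}D\ne\emptyset$. For $x\in X$, $w(x)=\{\uparrow F: F\in X^{(<\omega)}, F\ll_{I_2}x\}$. $X$ is $QI_2$-continuous if for every $x\in X$, $w(x)$ is an irreducible subset of $P_S(X)$ and $\uparrow x=\bigcap w(x)$. *)

(* Defs.v *)
From mathcomp Require Import all_boot all_classical.
From mathcomp Require Import topology_structure compact separation_axioms.
Set Implicit Arguments. Unset Strict Implicit. Unset Printing Implicit Defensive.
Local Open Scope classical_set_scope.

Section GSI2.
Variable X : topologicalType.

Definition spec (x y : X) : Prop := closure [set y] x.

Definition upset (A : set X) : set X := [set y | exists2 a, A a & spec a y].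
Definition upx (x : X) : set X := upset [set x].

Definition ubounds (A : set X) : set X := [set y | forall a, A a -> spec a y].
Definition lbounds (A : set X) : set X := [set y | forall a, A a -> spec y a].
Definition delta (A : set X) : set X := lbounds (ubounds A).

Definition irreducible (A : set X) : Prop :=
  A !=set0 /\
  forall F1 F2 : set X, closed F1 -> closed F2 -> A `<=` F1 `|` F2 ->
    A `<=` F1 \/ A `<=` F2.

Definition fin_ne (G : set X) : Prop := finite_set G /\ G !=set0.

Definition PS : set (set X) :=
  [set Q | Q !=set0 /\ compact Q /\ upset Q = Q].

Definition box (U : set X) : set (set X) := [set Q | PS Q /\ Q `<=` U].

(* open sets of the upper Vietoris topology on P_S(X): unions of basic sets *)
Definition PS_open (V : set (set X)) : Prop :=
  V `<=` PS /\ forall Q, V Q -> exists2 U, open U & (Q `<=` U /\ box U `<=` V).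

Definition PS_closed (C : set (set X)) : Prop :=
  C `<=` PS /\ PS_open (PS `\` C).

Definition PS_irreducible (A : set (set X)) : Prop :=
  A `<=` PS /\ A !=set0 /\
  forall C1 C2, PS_closed C1 -> PS_closed C2 -> A `<=` C1 `|` C2 ->
    A `<=` C1 \/ A `<=` C2.

Definition directed (I : Type) (le : I -> I -> Prop) : Prop :=
  (exists i : I, True) /\ (forall i, le i i) /\
  (forall i j k, le i j -> le j k -> le i k) /\
  (forall i j, exists k, le i k /\ le j k).

Definition eventually (I : Type) (le : I -> I -> Prop) (s : I -> X) (U : set X) :=
  exists i0, forall i, le i0 i -> U (s i).

Definition GSI2_conv (I : Type) (le : I -> I -> Prop) (s : I -> X) (x : X) : Prop :=
  exists F : set (set X),
    (forall G, F G -> fin_ne G) /\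
    PS_irreducible [set upset G | G in F] /\
    (forall U : set X, open U -> (exists2 G, F G & upset G `<=` U) ->
        eventually le s U) /\
    \bigcap_(G in F) upset G `<=` upx x.

Definition O_GSI2 : set (set X) :=
  [set U | forall (I : Type) (le : I -> I -> Prop) (s : I -> X) (x : X),
     directed le -> GSI2_conv le s x -> U x -> eventually le s U].

Definition O_GSI2_conv (I : Type) (le : I -> I -> Prop) (s : I -> X) (x : X) : Prop :=
  forall U, O_GSI2 U -> U x -> eventually le s U.

Definition GSI2_topological : Prop :=
  forall (I : Type) (le : I -> I -> Prop) (s : I -> X) (x : X),
    directed le -> (GSI2_conv le s x <-> O_GSI2_conv le s x).

Definition way_below_I2 (A : set X) (x : X) : Prop :=
  forall D : set X, irreducible D -> delta D x -> A `&` closure D !=set0.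

Definition w (x : X) : set (set X) :=
  [set upset F | F in [set F | fin_ne F /\ way_below_I2 F x]].

Definition QI2_continuous : Prop :=
  forall x : X, PS_irreducible (w x) /\ upx x = \bigcap_(Q in w x) Q.

End GSI2.

(* Main.v *)
Require Import Defs.
From mathcomp Require Import all_boot all_classical.
From mathcomp Require Import topology_structure compact separation_axioms.
Set Implicit Arguments. Unset Strict Implicit. Unset Printing Implicit Defensive.
Local Open Scope classical_set_scope.

Section Helpers.
Variable X : topologicalType.
Implicit Types (A B : set X) (x y z : X).

Lemma specP x y : spec x y <-> (forall O, open O -> O x -> O y).
Proof.
split.
- move=> h O oO Ox.
  have : nbhs x O by apply: open_nbhs_nbhs.
  by move=> /h [z [-> ]].
- move=> h B; rewrite nbhsE => -[O [oO Ox] OB].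
  by exists y; split => //; apply: OB; apply: h.
Qed.

Lemma spec_refl x : spec x x.
Proof. by apply/specP. Qed.

Lemma spec_trans x y z : spec x y -> spec y z -> spec x z.
Proof. by move=> /specP h1 /specP h2; apply/specP => O oO Ox; apply: h2 => //; apply: h1. Qed.

Lemma open_up O x y : open O -> O x -> spec x y -> O y.
Proof. by move=> oO Ox /specP h; apply: h. Qed.

Lemma closed_down K x y : closed K -> K y -> spec x y -> K x.
Proof.
move=> cK Ky /specP h; apply: contrapT => nKx.
have := h _ (closed_openC cK) nKx. by [].
Qed.

Lemma sub_upset A : A `<=` upset A.
Proof. by move=> a Aa; exists a => //; apply: spec_refl. Qed.

Lemma upset_idem A : upset (upset A) = upset A.
Proof.
apply/seteqP; split; last exact: sub_upset.
by move=> y [b [a Aa ab] bc]; exists a => //; apply: spec_trans ab bc.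
Qed.

Lemma open_upset_sub O A : open O -> A `<=` O -> upset A `<=` O.
Proof. by move=> oO AO y [a Aa ay]; apply: open_up ay => //; apply: AO. Qed.

Lemma compact_upx x : compact (upx x).
Proof.
move=> F PF Fx; exists x; split; first by exists x => //; apply: spec_refl.
move=> B C FB; rewrite nbhsE => -[O [oO Ox] OC].
have : F (B `&` upx x) by apply: filterI.
move=> /filter_ex [y [By [a -> ay]]].
exists y; split => //; apply: OC; apply: open_up ay => //.
Qed.

Lemma upsetU A B : upset (A `|` B) = upset A `|` upset B.
Proof.
apply/seteqP; split.
- by move=> y [a [Aa|Ba] ay]; [left|right]; exists a.
- by move=> y [[a Aa ay]|[a Ba ay]]; exists a => //; [left|right].
Qed.

Lemma upset1 x : upset [set x] = upx x.
Proof. by []. Qed.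

Lemma compact_upset_fin A : finite_set A -> compact (upset A).
Proof.
case/finite_setP=> n; elim: n A => [A|n ih A /eq_cardSP[x Ax /ih ?]].
  rewrite II0 card_eq0 => /eqP ->.
  have -> : upset (@set0 X) = set0 by apply/seteqP; split => // y [].
  exact: compact0.
rewrite -(setD1K Ax) upsetU; apply: compactU => //; exact: compact_upx.
Qed.

Lemma PS_upset_fin A : fin_ne A -> PS (upset A).
Proof.
move=> [fA [a Aa]]; split; first by exists a; apply: sub_upset.
by split; [exact: compact_upset_fin | exact: upset_idem].
Qed.


Lemma irr_meet (D U1 U2 : set X) : irreducible D -> open U1 -> open U2 ->
  U1 `&` D !=set0 -> U2 `&` D !=set0 -> U1 `&` U2 `&` D !=set0.
Proof.
move=> [_ hD] o1 o2 [a [U1a Da]] [b [U2b Db]]; apply: contrapT => h.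
have : D `<=` ~` U1 `|` ~` U2.
  move=> d Dd; apply: contrapT => /not_orP [/contrapT h1 /contrapT h2].
  by apply: h; exists d.
case/(hD _ _ (open_closedC o1) (open_closedC o2)) => sub.
- exact: (sub a Da).
- exact: (sub b Db).
Qed.

Lemma rudin (F : set (set X)) (U : set X) :
  PS_irreducible [set upset G | G in F] -> open U ->
  (forall G, F G -> ~ (upset G `<=` U)) ->
  exists D, [/\ irreducible D, closed D, D `<=` ~` U &
    (forall G, F G -> upset G `&` D !=set0)].
Proof.
move=> [hPS [hne hirr]] oU hU.
pose P := [set O : set X | open O /\ forall G, F G -> ~ (upset G `<=` O `|` U)].
have [O0 [[oO0 PO0] maxO0]] : exists A, P A /\ forall B, A `<` B -> ~ P B.
  apply: Zorn_bigcup => Phi PhiP tot; split.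
    by apply: bigcup_open => O /PhiP [].
  move=> G FG sub.
  have cG : compact (upset G) by have [_ []] := hPS (upset G) (ex_intro2 _ _ G FG erefl).
  case: (pselect (exists O, Phi O)) => [[O1 PhiO1]|nPhi]; last first.
    apply: (hU G FG) => y /sub [[O PhiO _]|//]; by case: nPhi; exists O.
  pose B := fun O : set X => upset G `&` ~` (O `|` U).
  have FF : Filter (filter_from Phi B).
    apply: filter_from_filter; first by exists O1.
    move=> i j Pi Pj; case: (tot i j Pi Pj) => ij.
    - exists j => // y [Gy nj]; split; last by split.
      split => // -[iy|Uy]; apply: nj; [left; exact: ij|by right].
    - exists i => // y [Gy ni]; split; first by split.
      split => // -[jy|Uy]; apply: ni; [left; exact: ij|by right].
  have PF : ProperFilter (filter_from Phi B).
    apply: filter_from_proper => O PhiO.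
    have [_ hO] := PhiP O PhiO.
    have /nonsubset [y [Gy nOU]] := hO G FG; by exists y.
  have [p [Gp clp]] := cG _ PF (ex_intro2 _ _ O1 PhiO1 (fun y => @proj1 _ _)).
  have [[O PhiO Op]|Up] := sub p Gp.
  - have := clp (B O) O (ex_intro2 _ _ O PhiO (fun y h => h)).
    have oO : open O by have [] := PhiP O PhiO.
    case=> [|y [[_ nOU] Oy]]; first exact: open_nbhs_nbhs.
    by apply: nOU; left.
  - have := clp (B O1) U (ex_intro2 _ _ O1 PhiO1 (fun y h => h)).
    case=> [|y [[_ nOU] Uy]]; first exact: open_nbhs_nbhs.
    by apply: nOU; right.
pose D := ~` (O0 `|` U).
have cD : closed D by apply: open_closedC; apply: openU.
have meetD : forall G, F G -> upset G `&` D !=set0.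
  by move=> G FG; apply: nonsubset; apply: PO0.
exists D; split => //; last by move=> y /not_orP [].
split.
  have [Q [G FG _]] := hne.
  by have [y [_ Dy]] := meetD G FG; exists y.
have key : forall F1, closed F1 ->
    [set upset G | G in F] `<=` [set Q | PS Q /\ Q `&` (D `&` F1) !=set0] ->
    D `<=` F1.
  move=> F1 cF1 hA.
  pose O' := O0 `|` ~` F1.
  have PO' : P O'.
    split; first by apply: openU => //; apply: closed_openC.
    move=> G FG sub.
    have [_ [y [Gy [Dy F1y]]]] := hA _ (ex_intro2 _ _ G FG erefl).
    have [[O0y|nF1y]|Uy] := sub y Gy.
    - by apply: Dy; left.
    - exact: nF1y.
    - by apply: Dy; right.
  have sO : O0 `<=` O' by move=> y O0y; left.
  have sO' : O' `<=` O0.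
    apply: contrapT => ns; exact: (maxO0 O' (conj sO ns) PO').
  move=> y Dy; apply: contrapT => nF1y.
  by apply: Dy; left; apply: sO'; right.
have Ccl : forall F1, closed F1 ->
    PS_closed [set Q | PS Q /\ Q `&` (D `&` F1) !=set0].
  move=> F1 cF1; split; first by move=> Q [].
  split; first by move=> Q [].
  move=> Q [PSQ nQ]; exists (~` (D `&` F1)).
    by apply: closed_openC; apply: closedI.
  split.
    by move=> y Qy Dy; apply: nQ; split => //; exists y.
  by move=> Q' [PSQ' sQ']; split => // -[_ [y [Q'y h]]]; exact: sQ' y Q'y h.
move=> F1 F2 cF1 cF2 sD.
case: (hirr _ _ (Ccl F1 cF1) (Ccl F2 cF2)).
- move=> _ [G FG <-]; have PSG := hPS _ (ex_intro2 _ _ G FG erefl).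
  have [y [Gy Dy]] := meetD G FG.
  by case: (sD y Dy) => Fy; [left|right]; split => //; exists y.
- by move=> h; left; apply: key.
- by move=> h; right; apply: key.
Qed.


Definition Kof (C : set (set X)) : set X :=
  ~` (\bigcup_(U in [set U | open U /\ box U `<=` @PS X `\` C]) U).

Lemma KofP (C : set (set X)) d : PS_closed C -> (Kof C d <-> C (upx d)).
Proof.
move=> [CPS [_ hop]]; split.
- move=> Kd; apply: contrapT => nC.
  have PSd : PS (upx d) by rewrite -upset1; apply: PS_upset_fin; split;
    [exact: finite_set1 | by exists d].
  have [U oU [sU bU]] := hop _ (conj PSd nC).
  by apply: Kd; exists U => //; apply: sU; exists d => //; apply: spec_refl.
- move=> Cd [U [oU bU] Ud].
  have PSd : PS (upx d) by apply: CPS.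
  have [_ ] := bU (upx d) (conj PSd (open_upset_sub oU (fun y (h : [set d] y) => eq_ind_r U Ud h))).
  by [].
Qed.

Lemma closed_Kof (C : set (set X)) : closed (Kof C).
Proof. by apply: open_closedC; apply: bigcup_open => U []. Qed.

Lemma O_GSI2_meets (D : set X) x (V : set X) : irreducible D -> delta D x ->
  O_GSI2 V -> V x -> V `&` D !=set0.
Proof.
move=> irrD dx OV Vx.
pose J := {p : set X * X | open p.1 /\ p.1 p.2 /\ D p.2}.
pose le := fun p q : J => (sval q).1 `<=` (sval p).1.
pose s := fun p : J => (sval p).2.
have [d0 Dd0] := irrD.1.
have dir : directed le.
  split; first by exists (exist _ (setT, d0) (conj openT (conj I Dd0))).
  split; first by move=> i.
  split; first by move=> i j k ij jk y /jk /ij.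
  move=> [[Ui xi] [oi [Uxi Dxi]]] [[Uj xj] [oj [Uxj Dxj]]].
  have [z [[Uiz Ujz] Dz]] := irr_meet irrD oi oj
    (ex_intro _ xi (conj Uxi Dxi)) (ex_intro _ xj (conj Uxj Dxj)).
  exists (exist _ (Ui `&` Uj, z) (conj (openI oi oj) (conj (conj Uiz Ujz) Dz))).
  by split => y [].
have conv : GSI2_conv le s x.
  exists [set G | exists2 d, D d & G = [set d]].
  split; first by move=> G [d Dd ->]; split; [exact: finite_set1 | by exists d].
  split.
    split; first by move=> _ [G [d Dd ->] <-]; apply: PS_upset_fin; split;
      [exact: finite_set1 | by exists d].
    split; first by exists (upset [set d0]); exists [set d0] => //; exists d0.
    move=> C1 C2 hC1 hC2 sub.
    have : D `<=` Kof C1 `|` Kof C2.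
      move=> d Dd; have [h|h] := sub (upset [set d]) (ex_intro2 _ _ [set d] (ex_intro2 _ _ d Dd erefl) erefl).
      - by left; apply/(KofP _ hC1).
      - by right; apply/(KofP _ hC2).
    case/(irrD.2 _ _ (@closed_Kof C1) (@closed_Kof C2)) => sK; [left|right];
      move=> _ [G [d Dd ->] <-]; [apply/(KofP _ hC1) | apply/(KofP _ hC2)]; exact: sK.
  split.
    move=> U oU [G [d Dd ->] sGU].
    have Ud : U d by apply: sGU; exists d => //; apply: spec_refl.
    exists (exist _ (U, d) (conj oU (conj Ud Dd) : open (U, d).1 /\ (U, d).1 (U, d).2 /\ D (U, d).2)) => i.
    move=> h; apply: h; exact: (proj1 (proj2 (svalP i))).
  move=> y hy; exists x => //; apply: dx => a Da.
  by have [a' -> ay] := hy [set a] (ex_intro2 _ _ a Da erefl).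
have [i0 hi0] := OV _ le s x dir conv Vx.
exists (s i0); split; first exact: hi0.
exact: (proj2 (proj2 (svalP i0))).
Qed.

Lemma O_GSI2T : O_GSI2 (@setT X).
Proof. by move=> I le s x [[i _] _] _ _; exists i. Qed.

Lemma O_GSI2I (U V : set X) : O_GSI2 U -> O_GSI2 V -> O_GSI2 (U `&` V).
Proof.
move=> OU OV I le s x dir conv [Ux Vx].
have [i hi] := OU _ le s x dir conv Ux.
have [j hj] := OV _ le s x dir conv Vx.
have [_ [_ [tr ub]]] := dir.
have [k [ik jk]] := ub i j.
by exists k => l kl; split; [apply: hi; apply: tr ik kl | apply: hj; apply: tr jk kl].
Qed.

End Helpers.

Theorem proposition4p7 (X : topologicalType) :
  @kolmogorov_space X -> GSI2_topological X -> QI2_continuous X.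
Proof.
move=> _ hT x.
pose J := {p : set X * X | O_GSI2 p.1 /\ p.1 x /\ p.1 p.2}.
pose le := fun p q : J => (sval q).1 `<=` (sval p).1.
pose s := fun p : J => (sval p).2.
have dir : directed le.
  split; first by exists (exist _ (setT, x) (conj (@O_GSI2T X) (conj I I))).
  split; first by move=> i.
  split; first by move=> i j k ij jk y /jk /ij.
  move=> i j; have [Oi [xi _]] := svalP i; have [Oj [xj _]] := svalP j.
  exists (exist _ ((sval i).1 `&` (sval j).1, x)
    (conj (O_GSI2I Oi Oj) (conj (conj xi xj) (conj xi xj)))).
  by split => y [].
have oconv : O_GSI2_conv le s x.
  move=> V OV Vx; exists (exist _ (V, x) (conj OV (conj Vx Vx))) => i h.
  apply: h; exact: (proj2 (proj2 (svalP i))).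
have [F [hfin [hirr [hev hcap]]]] := (proj2 (hT _ le s x dir)) oconv.
have wb : forall G, F G -> way_below_I2 G x.
  move=> G FG D irrD dx; apply: contrapT => hn.
  have sG : G `<=` ~` closure D.
    by move=> g Gg cg; apply: hn; exists g; split.
  have oC := closed_openC (@closed_closure _ D).
  have [i0 hi0] := hev _ oC (ex_intro2 _ _ G FG (open_upset_sub oC sG)).
  have [Oi0 [xi0 _]] := svalP i0.
  have [d [Vd Dd]] := O_GSI2_meets irrD dx Oi0 xi0.
  have := hi0 (exist _ ((sval i0).1, d) (conj Oi0 (conj xi0 Vd))) (fun y h => h).
  by apply; apply: subset_closure.
have AinW : forall G, F G -> w x (upset G).
  by move=> G FG; exists G => //; split; [exact: hfin | exact: wb].
have dense : forall F', fin_ne F' -> way_below_I2 F' x ->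
    forall U, open U -> F' `<=` U -> exists2 G, F G & upset G `<=` U.
  move=> F' fF' wF' U oU sU; apply: contrapT => hn.
  have [D [irrD cD DU meetD]] :=
    rudin hirr oU (fun G FG sGU => hn (ex_intro2 _ _ G FG sGU)).
  have dx : delta D x.
    move=> y uy.
    have : upx x y.
      apply: hcap => G FG; have [d [[g Gg gd] Dd]] := meetD G FG.
      by exists g => //; apply: spec_trans gd (uy d Dd).
    by case=> a ->.
  have [f [F'f clf]] := wF' D irrD dx.
  move: clf; rewrite -(proj1 (closure_id D) cD) => Df.
  exact: DU f Df (sU f F'f).
have upxE : upx x = \bigcap_(Q in w x) Q.
  apply/seteqP; split.
  - move=> y [a -> xy] _ [F' [fF' wF'] <-].
    have irr1 : irreducible [set x].
      split; first by exists x.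
      move=> F1 F2 _ _ sub; case: (sub x erefl) => h; [left|right]; by move=> z ->.
    have d1 : delta [set x] x by move=> z uz; apply: uz.
    have [f [F'f clf]] := wF' _ irr1 d1.
    by exists f => //; apply: spec_trans clf xy.
  - move=> y hy; apply: hcap => G FG; apply: hy; exact: AinW.
split; last exact: upxE.
have [hPS [hne hirr']] := hirr.
split; first by move=> _ [F' [fF' _] <-]; apply: PS_upset_fin.
split; first by have [_ [G FG _]] := hne; exists (upset G); apply: AinW.
move=> C1 C2 hC1 hC2 sub.
have key : forall C, PS_closed C -> [set upset G | G in F] `<=` C -> w x `<=` C.
  move=> C [CPS [_ hop]] AC _ [F' [fF' wF'] <-].
  apply: contrapT => nC.
  have PSF' := PS_upset_fin fF'.
  have [U oU [sU bU]] := hop _ (conj PSF' nC).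
  have [G FG sGU] := dense F' fF' wF' U oU (fun y h => sU y (@sub_upset X F' y h)).
  have := bU (upset G) (conj (hPS _ (ex_intro2 _ _ G FG erefl)) sGU).
  by case=> _; apply; apply: AC; exists G.
case: (hirr' C1 C2 hC1 hC2).
- by move=> _ [G FG <-]; apply: sub; exact: AinW.
- by move=> h; left; apply: key.
- by move=> h; right; apply: key.
Qed.
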